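(* (1) The relation $\sim$ is an equivalence relation on the set of positive ABMN solutions. (2) Each equivalence class contains exactly one standard solution and exactly one default solution.
   Context: ABMN system on $\mathbb{Z}$: real variables $a_i,b_i\ge0$, $m_i,n_i$ with, for all $i$, $(a_i+b_i)(m_i+a_i)=a_im_{i+1}+b_im_{i-1}$, $(a_i+b_i)(n_i+b_i)=a_in_{i+1}+b_in_{i-1}$, $(a_i+b_i)^2=b_i(m_{i+1}-m_{i-1})$, $(a_i+b_i)^2=a_i(n_{i-1}-n_{i+1})$; positive if all $a_i,b_i>0$; $m_{\pm\infty},n_{\pm\infty}$ denote the (real) limits of $m_i,n_i$ as $i\to\pm\infty$. For a quadruple of sequences $(a,b,m,n)$, $u>0$ and $v_1,v_2\in\mathbb{R}$, set $\tau_u(a,b,m,n)=(ua,ub,um,un)$ and $\chi_{v_1,v_2}(a,b,m,n)=(a,b,m+v_1,n+v_2)$. Two solutions are related by $\sim$ if one is the image of the other under $\tau_u\circ\chi_{v_1,v_2}$ for some such $u,v_1,v_2$. A positive solution is standard if $m_{-\infty}=0$, $n_\infty=0$, $m_\infty=1$; default if $m_{-\infty}=0$, $n_\infty=0$, $m_0-m_{-1}=1$. *)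

(* Defs.v *)
From Stdlib Require Import Reals ZArith Lra.
Open Scope R_scope.

Record quad := Quad { qa : Z -> R; qb : Z -> R; qm : Z -> R; qn : Z -> R }.

Definition ABMN (s : quad) : Prop :=
  forall i : Z,
    0 <= qa s i /\ 0 <= qb s i /\
    (qa s i + qb s i) * (qm s i + qa s i)
      = qa s i * qm s (i + 1)%Z + qb s i * qm s (i - 1)%Z /\
    (qa s i + qb s i) * (qn s i + qb s i)
      = qa s i * qn s (i + 1)%Z + qb s i * qn s (i - 1)%Z /\
    (qa s i + qb s i) ^ 2 = qb s i * (qm s (i + 1)%Z - qm s (i - 1)%Z) /\
    (qa s i + qb s i) ^ 2 = qa s i * (qn s (i - 1)%Z - qn s (i + 1)%Z).

Definition positive_ABMN (s : quad) : Prop :=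
  ABMN s /\ forall i : Z, 0 < qa s i /\ 0 < qb s i.

Definition lim_pinf (f : Z -> R) (L : R) : Prop :=
  forall eps : R, 0 < eps -> exists N : Z, forall i : Z, (N <= i)%Z -> Rabs (f i - L) < eps.
Definition lim_minf (f : Z -> R) (L : R) : Prop :=
  forall eps : R, 0 < eps -> exists N : Z, forall i : Z, (i <= N)%Z -> Rabs (f i - L) < eps.

Definition tau (u : R) (s : quad) : quad :=
  Quad (fun i => u * qa s i) (fun i => u * qb s i) (fun i => u * qm s i) (fun i => u * qn s i).
Definition chi (v1 v2 : R) (s : quad) : quad :=
  Quad (qa s) (qb s) (fun i => qm s i + v1) (fun i => qn s i + v2).

Definition image_of (s t : quad) : Prop :=
  exists u v1 v2 : R, 0 < u /\ t = tau u (chi v1 v2 s).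
Definition abmn_rel (s t : quad) : Prop := image_of s t \/ image_of t s.

Definition standard (s : quad) : Prop :=
  positive_ABMN s /\ lim_minf (qm s) 0 /\ lim_pinf (qn s) 0 /\ lim_pinf (qm s) 1.

Definition default_sol (s : quad) : Prop :=
  positive_ABMN s /\ lim_minf (qm s) 0 /\ lim_pinf (qn s) 0 /\ qm s 0%Z - qm s (-1)%Z = 1.

(* Main.v *)
Require Import Defs.
From Stdlib Require Import Reals ZArith Lra Lia Psatz FunctionalExtensionality.
Open Scope R_scope.

Lemma mono_up (f : Z -> R) (K : Z) :
  (forall i, (K <= i)%Z -> f i <= f (i+1)%Z) ->
  forall i j, (K <= i)%Z -> (i <= j)%Z -> f i <= f j.
Proof.
  intros H i j Hi Hij.
  assert (E : j = (i + Z.of_nat (Z.to_nat (j - i)))%Z) by lia.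
  rewrite E. clear E Hij. induction (Z.to_nat (j - i)) as [|n IH].
  - simpl. rewrite Z.add_0_r. lra.
  - replace (i + Z.of_nat (S n))%Z with ((i + Z.of_nat n) + 1)%Z by lia.
    eapply Rle_trans; [exact IH|]. apply H. lia.
Qed.

Lemma mono_down (f : Z -> R) (M : Z) :
  (forall i, (i < M)%Z -> f (i+1)%Z <= f i) ->
  forall i j, (j <= M)%Z -> (i <= j)%Z -> f j <= f i.
Proof.
  intros H i j Hj Hij.
  assert (E : i = (j - Z.of_nat (Z.to_nat (j - i)))%Z) by lia.
  rewrite E. clear E Hij. induction (Z.to_nat (j - i)) as [|n IH].
  - simpl. rewrite Z.sub_0_r. lra.
  - eapply Rle_trans; [exact IH|].
    replace (j - Z.of_nat n)%Z with ((j - Z.of_nat (S n)) + 1)%Z by lia.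
    apply H. lia.
Qed.

Lemma mono_all (f : Z -> R) :
  (forall i, f i <= f (i+1)%Z) -> forall i j, (i <= j)%Z -> f i <= f j.
Proof. intros H i j Hij. apply (mono_up f i); auto; lia. Qed.

Lemma conv_pinf (f : Z -> R) (B : R) :
  (forall i, f i <= f (i+1)%Z) -> (forall i, f i <= B) -> exists L, lim_pinf f L.
Proof.
  intros Hm HB.
  set (U := fun n : nat => f (Z.of_nat n)).
  assert (Hg : Un_growing U).
  { intro n. unfold U. rewrite Nat2Z.inj_succ. unfold Z.succ. apply Hm. }
  assert (Hb : has_ub U).
  { exists B. intros x [n ->]. apply HB. }
  destruct (growing_cv U Hg Hb) as [L HL].
  exists L. intros eps Heps. destruct (HL eps Heps) as [N HN].
  exists (Z.of_nat N). intros i Hi.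
  assert (H1 := growing_ineq U L Hg HL).
  assert (Hle : f i <= L).
  { replace i with (Z.of_nat (Z.to_nat i)) by lia. apply H1. }
  assert (Hge : f (Z.of_nat N) <= f i) by (apply mono_all; auto).
  specialize (HN N (le_n N)). unfold R_dist, U in HN.
  apply Rabs_def2 in HN. apply Rabs_def1; lra.
Qed.

Lemma lim_pinf_le (f : Z -> R) L :
  (forall i, f i <= f (i+1)%Z) -> lim_pinf f L -> forall i, f i <= L.
Proof.
  intros Hm HL i. destruct (Rle_dec (f i) L) as [h|h]; auto.
  destruct (HL (f i - L)) as [N HN]; [lra|].
  specialize (HN (Z.max N i) (Z.le_max_l _ _)).
  assert (f i <= f (Z.max N i)) by (apply mono_all; auto; lia).
  apply Rabs_def2 in HN. lra.
Qed.

Lemma lim_minf_ge (f : Z -> R) L :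
  (forall i, f i <= f (i+1)%Z) -> lim_minf f L -> forall i, L <= f i.
Proof.
  intros Hm HL i. destruct (Rle_dec L (f i)) as [h|h]; auto.
  destruct (HL (L - f i)) as [N HN]; [lra|].
  specialize (HN (Z.min N i) (Z.le_min_l _ _)).
  assert (f (Z.min N i) <= f i) by (apply mono_all; auto; lia).
  apply Rabs_def2 in HN. lra.
Qed.

Lemma lim_pinf_unique f L1 L2 : lim_pinf f L1 -> lim_pinf f L2 -> L1 = L2.
Proof.
  intros H1 H2. destruct (Req_dec L1 L2) as [e|n]; auto.
  set (e := Rabs (L1 - L2) / 2).
  assert (Hp : 0 < Rabs (L1 - L2)) by (apply Rabs_pos_lt; lra). assert (He : 0 < e) by (unfold e; lra).
  destruct (H1 e He) as [N1 HN1]. destruct (H2 e He) as [N2 HN2].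
  specialize (HN1 (Z.max N1 N2) (Z.le_max_l _ _)).
  specialize (HN2 (Z.max N1 N2) (Z.le_max_r _ _)).
  unfold e in *. apply Rabs_def2 in HN1. apply Rabs_def2 in HN2.
  destruct (Rcase_abs (L1 - L2)); [rewrite Rabs_left in *|rewrite Rabs_right in *]; lra.
Qed.

Lemma lim_minf_unique f L1 L2 : lim_minf f L1 -> lim_minf f L2 -> L1 = L2.
Proof.
  intros H1 H2. destruct (Req_dec L1 L2) as [e|n]; auto.
  set (e := Rabs (L1 - L2) / 2).
  assert (Hp : 0 < Rabs (L1 - L2)) by (apply Rabs_pos_lt; lra). assert (He : 0 < e) by (unfold e; lra).
  destruct (H1 e He) as [N1 HN1]. destruct (H2 e He) as [N2 HN2].
  specialize (HN1 (Z.min N1 N2) (Z.le_min_l _ _)).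
  specialize (HN2 (Z.min N1 N2) (Z.le_min_r _ _)).
  unfold e in *. apply Rabs_def2 in HN1. apply Rabs_def2 in HN2.
  destruct (Rcase_abs (L1 - L2)); [rewrite Rabs_left in *|rewrite Rabs_right in *]; lra.
Qed.

Lemma lim_pinf_aff f L u v : lim_pinf f L -> lim_pinf (fun i => u * (f i + v)) (u * (L + v)).
Proof.
  intros H eps He.
  destruct (H (eps / (Rabs u + 1))) as [N HN].
  { apply Rdiv_lt_0_compat; auto. pose proof (Rabs_pos u); lra. }
  exists N. intros i Hi. specialize (HN i Hi).
  replace (u * (f i + v) - u * (L + v)) with (u * (f i - L)) by ring.
  rewrite Rabs_mult. pose proof (Rabs_pos u). pose proof (Rabs_pos (f i - L)).
  apply Rmult_lt_compat_r with (r := Rabs u + 1) in HN; [|lra].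
  unfold Rdiv in HN. rewrite Rmult_assoc, Rinv_l in HN by lra. nra.
Qed.

Lemma lim_minf_aff f L u v : lim_minf f L -> lim_minf (fun i => u * (f i + v)) (u * (L + v)).
Proof.
  intros H eps He.
  destruct (H (eps / (Rabs u + 1))) as [N HN].
  { apply Rdiv_lt_0_compat; auto. pose proof (Rabs_pos u); lra. }
  exists N. intros i Hi. specialize (HN i Hi).
  replace (u * (f i + v) - u * (L + v)) with (u * (f i - L)) by ring.
  rewrite Rabs_mult. pose proof (Rabs_pos u). pose proof (Rabs_pos (f i - L)).
  apply Rmult_lt_compat_r with (r := Rabs u + 1) in HN; [|lra].
  unfold Rdiv in HN. rewrite Rmult_assoc, Rinv_l in HN by lra. nra.
Qed.

Lemma pinf_to_minf f L : lim_pinf (fun i => - f (- i)%Z) L -> lim_minf f (- L).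
Proof.
  intros H eps He. destruct (H eps He) as [N HN]. exists (- N)%Z.
  intros i Hi. specialize (HN (- i)%Z ltac:(lia)). rewrite Z.opp_involutive in HN.
  replace (f i - - L) with (- (- f i - L)) by ring. rewrite Rabs_Ropp. auto.
Qed.

Lemma grow (g : nat -> R) : 0 < g 0%nat -> (forall k, 2 * g k <= g (S k)) -> exists k, 1 <= g k.
Proof.
  intros H0 H.
  assert (Hk : forall k, g 0%nat * (1 + INR k) <= g k).
  { induction k. simpl. lra. rewrite S_INR. specialize (H k).
    assert (g 0%nat <= g k) by (pose proof (pos_INR k); nra). lra. }
  destruct (INR_unbounded (/ g 0%nat)) as [k Hk'].
  exists k. specialize (Hk k).
  assert (g 0%nat * INR k > 1).
  { apply Rmult_gt_compat_l with (r := g 0%nat) in Hk'; auto. rewrite Rinv_r in Hk'; lra. }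
  lra.
Qed.

Section S.
Variable s : quad.
Hypothesis Hs : positive_ABMN s.
Let a := qa s. Let b := qb s. Let m := qm s. Let n := qn s.

Lemma apos i : 0 < a i. Proof. apply (proj2 Hs i). Qed.
Lemma bpos i : 0 < b i. Proof. apply (proj2 Hs i). Qed.

Lemma stepm i : m (i+1)%Z - m i = 2 * a i + b i.
Proof.
  destruct (proj1 Hs i) as (_ & _ & E1 & _ & E3 & _).
  fold a b m in E1, E3. pose proof (apos i). pose proof (bpos i).
  set (D := m (i+1)%Z - m i). set (E := m i - m (i-1)%Z).
  assert (Z0 : (a i + b i) * (D - (2 * a i + b i)) = 0).
  { unfold D, E. nra. }
  apply Rmult_integral in Z0. destruct Z0; lra.
Qed.

Lemma stepm' i : b i * (m i - m (i-1)%Z) = a i ^ 2.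
Proof.
  destruct (proj1 Hs i) as (_ & _ & E1 & _ & E3 & _).
  fold a b m in E1, E3. pose proof (stepm i). nra.
Qed.

Lemma stepn i : n (i-1)%Z - n i = a i + 2 * b i.
Proof.
  destruct (proj1 Hs i) as (_ & _ & _ & E2 & _ & E4).
  fold a b n in E2, E4. pose proof (apos i). pose proof (bpos i).
  set (G := n (i-1)%Z - n i).
  assert (Z0 : (a i + b i) * (G - (a i + 2 * b i)) = 0).
  { unfold G. nra. }
  apply Rmult_integral in Z0. destruct Z0; lra.
Qed.

Lemma stepn' i : a i * (n i - n (i+1)%Z) = b i ^ 2.
Proof.
  destruct (proj1 Hs i) as (_ & _ & _ & E2 & _ & E4).
  fold a b n in E2, E4. pose proof (stepn i). nra.
Qed.

Lemma rel1 i : b (i+1)%Z * (2 * a i + b i) = a (i+1)%Z ^ 2.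
Proof.
  rewrite <- stepm, <- stepm'. replace (i + 1 - 1)%Z with i by ring. reflexivity.
Qed.

Lemma rel2 i : a i * (a (i+1)%Z + 2 * b (i+1)%Z) = b i ^ 2.
Proof.
  rewrite <- stepn', <- stepn. replace (i + 1 - 1)%Z with i by ring. reflexivity.
Qed.

Lemma ratio i : 2 * a i * b (i+1)%Z <= a (i+1)%Z * b i.
Proof.
  pose proof (rel1 i). pose proof (rel2 i).
  pose proof (apos i). pose proof (bpos i). pose proof (apos (i+1)). pose proof (bpos (i+1)).
  set (x := a i) in *. set (y := b i) in *. set (X := a (i+1)%Z) in *. set (Y := b (i+1)%Z) in *.
  assert (h1 : 2 * x * Y <= y ^ 2) by nra.
  assert (h2 : (2 * x * Y) ^ 2 <= (X * y) ^ 2).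
  { replace ((X*y)^2) with (X^2 * y^2) by ring. rewrite <- H.
    assert (Y * (2*x+y) * y^2 >= Y * (2*x+y) * (2*x*Y)).
    { apply Rle_ge. apply Rmult_le_compat_l; nra. }
    nra. }
  assert (0 < X * y) by nra. assert (0 < 2*x*Y) by nra. nra.
Qed.

Lemma half_fwd i : b i <= a i -> a (i+1)%Z + b (i+1)%Z <= (a i + b i) / 2.
Proof.
  intro h. pose proof (rel2 i). pose proof (apos i). pose proof (bpos i).
  pose proof (apos (i+1)). pose proof (bpos (i+1)).
  assert (a (i+1)%Z + 2 * b (i+1)%Z <= b i) by nra. lra.
Qed.

Lemma half_bwd i : a (i+1)%Z <= b (i+1)%Z -> a i + b i <= (a (i+1)%Z + b (i+1)%Z) / 2.
Proof.
  intro h. pose proof (rel1 i). pose proof (apos i). pose proof (bpos i).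
  pose proof (apos (i+1)). pose proof (bpos (i+1)).
  assert (2 * a i + b i <= a (i+1)%Z) by nra. lra.
Qed.


Lemma m_mono i : m i <= m (i+1)%Z.
Proof. pose proof (stepm i). pose proof (apos i). pose proof (bpos i). lra. Qed.

Lemma n_mono i : - n i <= - n (i+1)%Z.
Proof. pose proof (stepn (i+1)). replace (i+1-1)%Z with i in H by ring.
  pose proof (apos (i+1)). pose proof (bpos (i+1)). lra. Qed.

Lemma fwd_N : exists N, forall i, (N <= i)%Z -> b i <= a i.
Proof.
  set (r := fun i => a i / b i).
  assert (Hr : forall i, 2 * r i <= r (i+1)%Z).
  { intro i. unfold r. pose proof (ratio i). pose proof (apos i). pose proof (bpos i).
    pose proof (bpos (i+1)). fold a b in H.
    apply (Rmult_le_reg_r (b i * b (i+1)%Z)); [nra|].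
    replace (2 * (a i / b i) * (b i * b (i+1)%Z)) with (2 * a i * b (i+1)%Z) by (field; lra).
    replace (a (i+1)%Z / b (i+1)%Z * (b i * b (i+1)%Z)) with (a (i+1)%Z * b i) by (field; lra).
    exact H. }
  destruct (grow (fun k => r (Z.of_nat k))) as [k Hk].
  { unfold r. pose proof (apos 0). pose proof (bpos 0). simpl. apply Rdiv_lt_0_compat; auto. }
  { intro k. rewrite Nat2Z.inj_succ. apply Hr. }
  exists (Z.of_nat k). intros i Hi.
  assert (r (Z.of_nat k) <= r i).
  { apply mono_all; auto. intro j. pose proof (Hr j).
    assert (0 < r j) by (unfold r; apply Rdiv_lt_0_compat; [apply apos|apply bpos]). lra. }
  assert (1 <= r i) by lra. unfold r in H0. pose proof (bpos i).
  apply (Rmult_le_compat_r (b i)) in H0; [|lra]. unfold Rdiv in H0.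
  rewrite Rmult_assoc, Rinv_l in H0; lra.
Qed.

Lemma bwd_M : exists M, forall i, (i <= M)%Z -> a i <= b i.
Proof.
  set (r := fun i => b i / a i).
  assert (Hr : forall i, 2 * r (i+1)%Z <= r i).
  { intro i. unfold r. pose proof (ratio i). pose proof (apos i). pose proof (apos (i+1)).
    pose proof (bpos i). fold a b in H.
    apply (Rmult_le_reg_r (a i * a (i+1)%Z)); [nra|].
    replace (2 * (b (i+1)%Z / a (i+1)%Z) * (a i * a (i+1)%Z)) with (2 * a i * b (i+1)%Z) by (field; lra).
    replace (b i / a i * (a i * a (i+1)%Z)) with (a (i+1)%Z * b i) by (field; lra).
    exact H. }
  destruct (grow (fun k => r (- Z.of_nat k)%Z)) as [k Hk].
  { unfold r. pose proof (apos 0). pose proof (bpos 0). simpl. apply Rdiv_lt_0_compat; auto. }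
  { intro k. rewrite Nat2Z.inj_succ. pose proof (Hr (- Z.succ (Z.of_nat k))%Z).
    replace (- Z.succ (Z.of_nat k) + 1)%Z with (- Z.of_nat k)%Z in H by lia. exact H. }
  exists (- Z.of_nat k)%Z. intros i Hi.
  assert (r (- Z.of_nat k)%Z <= r i).
  { apply (mono_down r (- Z.of_nat k)%Z); [|lia|lia]. intros j _. pose proof (Hr j).
    assert (0 < r (j+1)%Z) by (unfold r; apply Rdiv_lt_0_compat; [apply bpos|apply apos]). lra. }
  assert (1 <= r i) by lra. unfold r in H0. pose proof (apos i).
  apply (Rmult_le_compat_r (a i)) in H0; [|lra]. unfold Rdiv in H0.
  rewrite Rmult_assoc, Rinv_l in H0; lra.
Qed.

Lemma m_up : exists B, forall i, m i <= B.
Proof.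
  destruct fwd_N as [N HN].
  set (h := fun i => - (m i + 4 * (a i + b i))).
  assert (Hh : forall i, (N <= i)%Z -> h i <= h (i+1)%Z).
  { intros i Hi. unfold h. pose proof (half_fwd i (HN i Hi)). pose proof (stepm i).
    pose proof (apos i). pose proof (bpos i). lra. }
  exists (- h N). intro i. destruct (Z.le_ge_cases N i) as [H|H].
  - pose proof (mono_up h N Hh N i (Z.le_refl _) H). unfold h in *.
    pose proof (apos i). pose proof (bpos i). lra.
  - pose proof (mono_all m m_mono i N H). unfold h.
    pose proof (apos N). pose proof (bpos N). lra.
Qed.

Lemma n_low : exists B, forall i, - n i <= B.
Proof.
  destruct fwd_N as [N HN].
  set (h := fun i => n i - 2 * (a i + b i)).
  assert (Hh : forall i, (N <= i)%Z -> h i <= h (i+1)%Z).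
  { intros i Hi. unfold h. pose proof (half_fwd i (HN i Hi)). pose proof (stepn (i+1)).
    replace (i+1-1)%Z with i in H0 by ring.
    pose proof (apos (i+1)). pose proof (bpos (i+1)). lra. }
  exists (- h N). intro i. destruct (Z.le_ge_cases N i) as [H|H].
  - pose proof (mono_up h N Hh N i (Z.le_refl _) H). unfold h in *.
    pose proof (apos i). pose proof (bpos i). lra.
  - pose proof (mono_all (fun i => - n i) n_mono i N H). unfold h. simpl in H0.
    pose proof (apos N). pose proof (bpos N). lra.
Qed.

Lemma m_low : exists B, forall i, B <= m i.
Proof.
  destruct bwd_M as [M HM].
  set (h := fun i => m i - 2 * (a i + b i)).
  assert (Hh : forall i, (i < M)%Z -> h (i+1)%Z <= h i).
  { intros i Hi. unfold h. pose proof (half_bwd i (HM (i+1)%Z ltac:(lia))). pose proof (stepm i).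
    pose proof (apos i). pose proof (bpos i). lra. }
  exists (h M). intro i. destruct (Z.le_ge_cases i M) as [H|H].
  - pose proof (mono_down h M Hh i M (Z.le_refl _) H). unfold h in *.
    pose proof (apos i). pose proof (bpos i). lra.
  - pose proof (mono_all m m_mono M i H). unfold h.
    pose proof (apos M). pose proof (bpos M). lra.
Qed.

Lemma lim_pinf_ext f g L : (forall i, f i = g i) -> lim_pinf f L -> lim_pinf g L.
Proof. intros E H eps He. destruct (H eps He) as [N HN]. exists N. intros i Hi. rewrite <- E. auto. Qed.

Lemma limits : exists Lm Lp Ln, lim_minf m Lm /\ lim_pinf m Lp /\ lim_pinf n Ln.
Proof.
  destruct m_up as [B1 H1]. destruct n_low as [B2 H2]. destruct m_low as [B3 H3].
  destruct (conv_pinf m B1 m_mono H1) as [Lp HLp].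
  destruct (conv_pinf (fun i => - n i) B2 n_mono H2) as [Ln HLn].
  destruct (conv_pinf (fun i => - m (- i)%Z) (- B3)) as [Lm HLm].
  { intro i. pose proof (m_mono (- (i+1))%Z). replace (- (i+1) + 1)%Z with (- i)%Z in H by ring. lra. }
  { intro i. specialize (H3 (- i)%Z). lra. }
  exists (- Lm), Lp, (- Ln). split; [|split]; auto.
  - apply pinf_to_minf; auto.
  - apply lim_pinf_aff with (u := -1) (v := 0) in HLn.
    replace (- Ln) with (-1 * (Ln + 0)) by ring.
    eapply lim_pinf_ext; [|exact HLn]. intro i; simpl; ring.
Qed.
End S.

Lemma quad_eq (s t : quad) :
  (forall i, qa s i = qa t i) -> (forall i, qb s i = qb t i) ->
  (forall i, qm s i = qm t i) -> (forall i, qn s i = qn t i) -> s = t.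
Proof.
  destruct s, t; simpl; intros.
  f_equal; apply functional_extensionality; auto.
Qed.

Lemma image_refl s : image_of s s.
Proof. exists 1, 0, 0. split; [lra|]. apply quad_eq; intro i; simpl; ring. Qed.

Lemma image_sym s t : image_of s t -> image_of t s.
Proof.
  intros (u & v1 & v2 & Hu & ->). exists (/ u), (- u * v1), (- u * v2).
  split; [apply Rinv_0_lt_compat; auto|].
  apply quad_eq; intro i; simpl; field; lra.
Qed.

Lemma image_trans s t w : image_of s t -> image_of t w -> image_of s w.
Proof.
  intros (u & v1 & v2 & Hu & ->) (u' & v1' & v2' & Hu' & ->).
  exists (u * u'), (v1 + v1' / u), (v2 + v2' / u). split; [nra|].
  apply quad_eq; intro i; simpl; field; lra.
Qed.

Lemma rel_image s t : abmn_rel s t -> image_of s t.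
Proof. intros [H|H]; auto. apply image_sym; auto. Qed.

Lemma pos_image s u v1 v2 : positive_ABMN s -> 0 < u -> positive_ABMN (tau u (chi v1 v2 s)).
Proof.
  intros [H Hp] Hu. split.
  - intro i. destruct (H i) as (h1 & h2 & e1 & e2 & e3 & e4). simpl.
    repeat split; try nra.
  - intro i. destruct (Hp i). simpl. split; nra.
Qed.

Theorem mainTheorem9 :
  ((forall s, positive_ABMN s -> abmn_rel s s) /\
   (forall s t, positive_ABMN s -> positive_ABMN t -> abmn_rel s t -> abmn_rel t s) /\
   (forall s t w, positive_ABMN s -> positive_ABMN t -> positive_ABMN w ->
      abmn_rel s t -> abmn_rel t w -> abmn_rel s w)) /\
  (forall s, positive_ABMN s ->
     (exists t, positive_ABMN t /\ abmn_rel s t /\ standard t /\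
        forall t', positive_ABMN t' -> abmn_rel s t' -> standard t' -> t' = t) /\
     (exists t, positive_ABMN t /\ abmn_rel s t /\ default_sol t /\
        forall t', positive_ABMN t' -> abmn_rel s t' -> default_sol t' -> t' = t)).
Proof.
  split.
  { split; [|split].
    - intros s _. left. apply image_refl.
    - intros s t _ _ [H|H]; [right|left]; auto.
    - intros s t w _ _ _ H1 H2. left. eapply image_trans; apply rel_image; eauto. }
  intros s Hs.
  destruct (limits s Hs) as (Lm & Lp & Ln & HLm & HLp & HLn).
  assert (Hmono := m_mono s Hs).
  assert (Hd : 0 < qm s 0%Z - qm s (-1)%Z).
  { pose proof (stepm s Hs (-1)). simpl in H. pose proof (apos s Hs (-1)). pose proof (bpos s Hs (-1)).
    lra. }
  assert (Hlt : 0 < Lp - Lm).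
  { pose proof (lim_minf_ge _ _ Hmono HLm (-1)). pose proof (lim_pinf_le _ _ Hmono HLp 0). lra. }
  split.
  - exists (tau (/ (Lp - Lm)) (chi (- Lm) (- Ln) s)).
    assert (Hu : 0 < / (Lp - Lm)) by (apply Rinv_0_lt_compat; auto).
    split; [apply pos_image; auto|]. split; [left; exists (/ (Lp - Lm)), (- Lm), (- Ln); split; auto|].
    split.
    + split; [apply pos_image; auto|]. simpl. split; [|split].
      * replace 0 with (/ (Lp - Lm) * (Lm + - Lm)) by ring. apply lim_minf_aff; auto.
      * replace 0 with (/ (Lp - Lm) * (Ln + - Ln)) by ring. apply lim_pinf_aff; auto.
      * replace 1 with (/ (Lp - Lm) * (Lp + - Lm)) by (field; lra). apply lim_pinf_aff; auto.
    + intros t' _ Hr (_ & H1 & H2 & H3).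
      destruct (rel_image _ _ Hr) as (u & v1 & v2 & Hu' & ->). simpl in H1, H2, H3.
      pose proof (lim_minf_unique _ _ _ H1 (lim_minf_aff _ _ u v1 HLm)).
      pose proof (lim_pinf_unique _ _ _ H2 (lim_pinf_aff _ _ u v2 HLn)).
      pose proof (lim_pinf_unique _ _ _ H3 (lim_pinf_aff _ _ u v1 HLp)).
      assert (E1 : v1 = - Lm).
      { symmetry in H. apply Rmult_integral in H. destruct H; lra. }
      assert (E2 : v2 = - Ln).
      { symmetry in H0. apply Rmult_integral in H0. destruct H0; lra. }
      subst v1 v2.
      assert (E3 : u = / (Lp - Lm)).
      { apply (Rmult_eq_reg_r (Lp - Lm)); [|lra]. rewrite Rinv_l by lra. lra. }
      subst u. reflexivity.
  - set (d := qm s 0%Z - qm s (-1)%Z) in *.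
    exists (tau (/ d) (chi (- Lm) (- Ln) s)).
    assert (Hu : 0 < / d) by (apply Rinv_0_lt_compat; auto).
    split; [apply pos_image; auto|]. split; [left; exists (/ d), (- Lm), (- Ln); split; auto|].
    split.
    + split; [apply pos_image; auto|]. simpl. split; [|split].
      * replace 0 with (/ d * (Lm + - Lm)) by ring. apply lim_minf_aff; auto.
      * replace 0 with (/ d * (Ln + - Ln)) by ring. apply lim_pinf_aff; auto.
      * unfold d. field. unfold d in Hd; lra.
    + intros t' _ Hr (_ & H1 & H2 & H3).
      destruct (rel_image _ _ Hr) as (u & v1 & v2 & Hu' & ->). simpl in H1, H2, H3.
      pose proof (lim_minf_unique _ _ _ H1 (lim_minf_aff _ _ u v1 HLm)).
      pose proof (lim_pinf_unique _ _ _ H2 (lim_pinf_aff _ _ u v2 HLn)).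
      assert (E1 : v1 = - Lm).
      { symmetry in H. apply Rmult_integral in H. destruct H; lra. }
      assert (E2 : v2 = - Ln).
      { symmetry in H0. apply Rmult_integral in H0. destruct H0; lra. }
      subst v1 v2.
      assert (E3 : u = / d).
      { apply (Rmult_eq_reg_r d); [|lra]. rewrite Rinv_l by lra. unfold d. lra. }
      subst u. reflexivity.
Qed.
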